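(* Let $\beta=(\pi_\ell)_{\ell=1}^L$, $\pi_\ell=(a_\ell,b_\ell,c_\ell,d_\ell)$, be a chainable architecture with $L\ge 2$. Then $\mathcal{B}^\beta\subseteq\Sigma^{\pi_1*\cdots*\pi_L}$, and $$\pi_1*\cdots*\pi_L=\Big(a_1,\ \frac{b_1d_1}{d_L},\ \frac{a_Lc_L}{a_1},\ d_L\Big).$$
   Context: A pattern is a tuple $\pi=(a,b,c,d)$ of positive integers; $\mathbf{S}_\pi:=\mathbf{I}_a\otimes\mathbf{1}_{b\times c}\otimes\mathbf{I}_d\in\{0,1\}^{abd\times acd}$. A $\pi$-factor is a complex $abd\times acd$ matrix with support contained in that of $\mathbf{S}_\pi$; $\Sigma^\pi$ is the set of $\pi$-factors. Patterns $\pi=(a,b,c,d),\pi'=(a',b',c',d')$ are chainable if $ac/a'=b'd'/d$ is an integer, $a\mid a'$, $d'\mid d$; then $\pi*\pi':=(a,bd/d',a'c'/a,d')$. An architecture $\beta=(\pi_\ell)_{\ell=1}^L$ is a sequence of patterns with $a_\ell c_\ell d_\ell=a_{\ell+1}b_{\ell+1}d_{\ell+1}$; it is chainable if every consecutive pair is chainable. $\pi_1*\cdots*\pi_L$ denotes the iterated product $((\pi_1*\pi_2)*\cdots)*\pi_L$. $\mathcal{B}^\beta:=\{\mathbf{X}_1\cdots\mathbf{X}_L:\mathbf{X}_\ell\in\Sigma^{\pi_\ell}\}$. *)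

(* Defs.v *)
From HB Require Import structures.
From mathcomp Require Import all_boot all_order all_algebra.
From mathcomp Require Import complex.
From mathcomp Require Import Rstruct.
Set Implicit Arguments. Unset Strict Implicit. Unset Printing Implicit Defensive.
Import Order.TTheory GRing.Theory Num.Theory.
Local Open Scope ring_scope.

Definition Cplx : Type := (Rdefinitions.R)[i].

(* A (finite) matrix is represented as a function nat -> nat -> C;
   dimensions are carried separately, entries outside the intended
   box being 0 (this is enforced for pi-factors by the support condition). *)
Definition mat := nat -> nat -> Cplx.

Definition idm (n : nat) : mat := fun i j => ((i < n)%N && (i == j))%:R.
Definition ones (m n : nat) : mat := fun i j => ((i < m)%N && (j < n)%N)%:R.

(* Kronecker product A (x) B where B is m2 x n2 (row-major indexing). *)
Definition kron (m2 n2 : nat) (A B : mat) : mat :=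
  fun i j => A (i %/ m2)%N (j %/ n2)%N * B (i %% m2)%N (j %% n2)%N.

Definition mmul (k : nat) (X Y : mat) : mat :=
  fun i j => \sum_(t < k) X i t * Y t j.

Record pattern := Pattern { pa : nat; pb : nat; pc : nat; pd : nat }.

Definition pattern_pos (p : pattern) : Prop :=
  (0 < pa p)%N /\ (0 < pb p)%N /\ (0 < pc p)%N /\ (0 < pd p)%N.

(* S_pi = I_a (x) 1_{b x c} (x) I_d, an abd x acd 0/1 matrix. *)
Definition Spat (p : pattern) : mat :=
  kron (pd p) (pd p) (kron (pb p) (pc p) (idm (pa p)) (ones (pb p) (pc p)))
       (idm (pd p)).

Definition is_factor (p : pattern) (X : mat) : Prop :=
  forall i j, Spat p i j = 0 -> X i j = 0.

Definition chainable (p q : pattern) : Prop :=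
  [/\ (pa q %| pa p * pc p)%N, (pd p %| pb q * pd q)%N,
      ((pa p * pc p) %/ pa q = (pb q * pd q) %/ pd p)%N,
      (pa p %| pa q)%N & (pd q %| pd p)%N].

Definition pstar (p q : pattern) : pattern :=
  Pattern (pa p) ((pb p * pd p) %/ pd q)%N ((pa q * pc q) %/ pa p)%N (pd q).

Definition default_pattern := Pattern 1 1 1 1.
Definition arch_nth (beta : seq pattern) (l : nat) := nth default_pattern beta l.

Definition is_architecture (beta : seq pattern) : Prop :=
  (forall l, (l < size beta)%N -> pattern_pos (arch_nth beta l)) /\
  (forall l, (l.+1 < size beta)%N ->
     (pa (arch_nth beta l) * pc (arch_nth beta l) * pd (arch_nth beta l) =
      pa (arch_nth beta l.+1) * pb (arch_nth beta l.+1) * pd (arch_nth beta l.+1))%N).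

Definition chainable_arch (beta : seq pattern) : Prop :=
  forall l, (l.+1 < size beta)%N -> chainable (arch_nth beta l) (arch_nth beta l.+1).

Definition pstar_all (beta : seq pattern) : pattern :=
  foldl pstar (head default_pattern beta) (behead beta).

(* Left-to-right product X_1 X_2 ... X_L; the inner dimension at each step
   is the row count a_l b_l d_l of the next pattern. *)
Fixpoint chain_prod (acc : mat) (s : seq (pattern * mat)) : mat :=
  match s with
  | [::] => acc
  | (p, X) :: s' => chain_prod (mmul (pa p * pb p * pd p)%N acc X) s'
  end.

Definition inB (beta : seq pattern) (M : mat) : Prop :=
  exists Xs : seq mat,
    size Xs = size beta /\
    (forall l, (l < size beta)%N -> is_factor (arch_nth beta l) (nth (fun _ _ => 0) Xs l)) /\
    M = chain_prod (head (fun _ _ => 0) Xs) (zip (behead beta) (behead Xs)).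

(* Main.v *)
Require Import Defs.
From mathcomp Require Import all_boot all_order all_algebra.
From mathcomp Require Import complex Rstruct.
From mathcomp Require Import zify ring.
Import GRing.Theory Num.Theory.

Lemma factorP p (X : mat) :
  is_factor p X <-> forall i j, X i j != 0%R -> Spat p i j != 0%R.
Proof.
split=> H i j.
  move=> nz; apply/negP => /eqP /H /eqP; by rewrite (negbTE nz).
move=> S0; apply/eqP; move: (H i j); rewrite S0 eqxx; by case: (X i j == 0%R) => // /(_ isT).
Qed.

Definition scond (p : pattern) i j :=
  [&& i %/ pd p %/ pb p < pa p, i %/ pd p %/ pb p == j %/ pd p %/ pc p
    & i %% pd p == j %% pd p].

Lemma Spat_neq0 p i j : Spat p i j != 0%R -> scond p i j.
Proof.
rewrite /scond /Spat /kron /idm /ones !mulf_eq0 !negb_or !pnatr_eq0 !eqb0 !negbK.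
by case/and3P=> [/and3P[/andP[-> ->] _ _] _ ->].
Qed.

Lemma Spat_of_cond p i j : pattern_pos p -> scond p i j -> Spat p i j != 0%R.
Proof.
case: p => a b c d [/= a0 [b0 [c0 d0]]] /and3P[/= h1 h2 h3].
rewrite /Spat /kron /idm /ones /= h1 h2 h3 !ltn_mod b0 c0 d0 /=.
by rewrite !mul1r oner_neq0.
Qed.

Lemma step_cond (p q : pattern) i t k : pattern_pos p -> pattern_pos q ->
  chainable p q -> scond p i t -> scond q t k -> scond (pstar p q) i k.
Proof.
case: p => a b c d; case: q => a' b' c' d'.
move=> [/= a0 [b0 [c0 d0]]] [/= a0' [b0' [c0' d0']]] [/= h1 h2 h3 h4 h5].
rewrite /scond /pstar /=.
move/dvdnP: h4 => [n En]; subst a'.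
move/dvdnP: h5 => [e Ee]; subst d.
move/dvdnP: h2 => [f Hf].
move/dvdnP: h1 => [g Hg].
rewrite Hg Hf !mulnK // in h3; subst g.
have Ec : c = f * n.
  apply/eqP; rewrite -(eqn_pmul2l a0); apply/eqP; rewrite Hg; ring.
subst c.
rewrite -!divnMA.
move=> /and3P[H1 H2 H3] /and3P[H4 H5 H6].
have -> : b * (e * d') = (b * e) * d' by ring.
have -> : n * a * c' = (n * c') * a by ring.
rewrite !mulnK //.
have Ei : d' * (b * e) = e * d' * b by ring.
rewrite Ei H1 (eqP H2) /=.
apply/andP; split.
  have -> : d' * (n * c') = d' * c' * n by ring.
  rewrite (divnMA k) -(eqP H5) -divnMA.
  have -> : d' * b' * n = e * d' * (f * n) by rewrite (mulnC d') Hf; ring.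
  by [].
have E1 : i %% d' = (i %% (e * d')) %% d'.
  by rewrite -(modn_dvdm i (dvdn_mull e (dvdnn d'))).
have E2 : t %% d' = (t %% (e * d')) %% d'.
  by rewrite -(modn_dvdm t (dvdn_mull e (dvdnn d'))).
by rewrite E1 (eqP H3) -E2.
Qed.

Lemma mmul_neq0 k (X Y : mat) i j : mmul k X Y i j != 0%R ->
  exists t, X i t != 0%R /\ Y t j != 0%R.
Proof.
rewrite /mmul.
case: (pickP (fun t : 'I_k => X i t * Y t j != 0)%R) => [t Ht | H].
  move=> _; exists t; move: Ht; rewrite mulf_eq0 negb_or => /andP[] //.
rewrite big1 ?eqxx // => t _; apply/eqP; move: (H t) => /= /negbFE //.
Qed.

Lemma step_factor p q (X Y : mat) k : pattern_pos p -> pattern_pos q ->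
  chainable p q -> is_factor p X -> is_factor q Y ->
  is_factor (pstar p q) (mmul k X Y).
Proof.
move=> pp pq cpq /factorP HX /factorP HY; apply/factorP => i j /mmul_neq0 [t [h1 h2]].
have pr : pattern_pos (pstar p q).
  case: p pp cpq {HX h1} => a b c d [/= a0 [b0 [c0 d0]]];
  case: q pq {HY h2} => a' b' c' d' [/= a0' [b0' [c0' d0']]] [/= g1 g2 g3 g4 g5].
  rewrite /pattern_pos /=; split => //; split; last split => //.
    rewrite divn_gt0 //; apply: leq_trans (dvdn_leq d0 g5) _; exact: leq_pmull.
  rewrite divn_gt0 //; apply: leq_trans (dvdn_leq a0' g4) _; exact: leq_pmulr.
apply: Spat_of_cond => //.
apply: (@step_cond p q i t j) => //; apply: Spat_neq0; [exact: HX | exact: HY].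
Qed.

Lemma pos_star p q : pattern_pos p -> pattern_pos q -> chainable p q ->
  pattern_pos (pstar p q).
Proof.
case: p => a b c d [/= a0 [b0 [c0 d0]]];
case: q => a' b' c' d' [/= a0' [b0' [c0' d0']]] [/= g1 g2 g3 g4 g5].
rewrite /pattern_pos /=; split => //; split; last split => //.
  rewrite divn_gt0 //; apply: leq_trans (dvdn_leq d0 g5) _; exact: leq_pmull.
rewrite divn_gt0 //; apply: leq_trans (dvdn_leq a0' g4) _; exact: leq_pmulr.
Qed.

Lemma chain_star p q r : pattern_pos p -> pattern_pos q -> pattern_pos r ->
  chainable p q -> chainable q r -> chainable (pstar p q) r.
Proof.
case: p => a b c d [/= a0 [b0 [c0 d0]]];
case: q => a' b' c' d' [/= a0' [b0' [c0' d0']]];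
case: r => a'' b'' c'' d'' [/= a0'' [b0'' [c0'' d0'']]].
move=> [/= g1 g2 g3 g4 g5] [/= h1 h2 h3 h4 h5].
rewrite /chainable /pstar /=.
have -> : a * (a' * c' %/ a) = a' * c'.
  by rewrite mulnC divnK // dvdn_mulr.
split => //; exact: dvdn_trans g4 h4.
Qed.

Fixpoint chainP (p : pattern) (s : seq pattern) : Prop :=
  match s with
  | [::] => True
  | q :: s' => [/\ chainable p q, pattern_pos q & chainP q s']
  end.

Lemma chainP_star p q s : pattern_pos p -> pattern_pos q -> chainable p q ->
  chainP q s -> chainP (pstar p q) s.
Proof.
case: s => [//|r s] pp pq cpq /= [cqr pr cs]; split => //.
exact: chain_star.
Qed.

Lemma fold_formula s p0 : pattern_pos p0 -> chainP p0 s ->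
  foldl pstar p0 s = Pattern (pa p0) ((pb p0 * pd p0) %/ pd (last p0 s))
     ((pa (last p0 s) * pc (last p0 s)) %/ pa p0) (pd (last p0 s)).
Proof.
elim: s p0 => [|q s IH] p0 pp.
  case: p0 pp => a b c d [/= a0 [b0 [c0 d0]]] _.
  by rewrite /= mulnK // mulKn.
move=> /= [cpq pq cs].
case: s IH cs => [|r s] IH cs; first by [].
rewrite IH; [|exact: pos_star|exact: chainP_star].
rewrite /=.
case: cpq => _ _ _ _ h5.
by rewrite divnK // dvdn_mull.
Qed.

Lemma fold_factor s p0 (M0 : mat) (Xs : seq mat) : pattern_pos p0 -> chainP p0 s ->
  is_factor p0 M0 -> size Xs = size s ->
  (forall l, l < size s -> is_factor (nth default_pattern s l) (nth (fun _ _ => 0%R) Xs l)) ->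
  is_factor (foldl pstar p0 s) (chain_prod M0 (zip s Xs)).
Proof.
elim: s p0 M0 Xs => [|q s IH] p0 M0 [|X Xs] //= pp cs hM [hs] hX.
case: cs => cpq pq cs.
apply: IH => //.
- exact: pos_star.
- exact: chainP_star.
- apply: step_factor => //; exact: (hX 0).
- by move=> l hl; exact: (hX l.+1).
Qed.

Lemma arch_chainP s p :
  (forall l, l < size (p :: s) -> pattern_pos (nth default_pattern (p :: s) l)) ->
  (forall l, l.+1 < size (p :: s) ->
     chainable (nth default_pattern (p :: s) l) (nth default_pattern (p :: s) l.+1)) ->
  chainP p s.
Proof.
elim: s p => [//|q s IH] p hp hc /=; split.
- exact: (hc 0).
- exact: (hp 1).
- apply: IH => l hl; [exact: (hp l.+1) | exact: (hc l.+1)].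
Qed.

Local Open Scope ring_scope.

Theorem lemma4p9 (beta : seq pattern) :
  is_architecture beta -> chainable_arch beta -> (2 <= size beta)%N ->
  (forall M : mat, inB beta M -> is_factor (pstar_all beta) M) /\
  pstar_all beta =
    Pattern (pa (arch_nth beta 0))
            ((pb (arch_nth beta 0) * pd (arch_nth beta 0)) %/ pd (arch_nth beta (size beta).-1))%N
            ((pa (arch_nth beta (size beta).-1) * pc (arch_nth beta (size beta).-1)) %/ pa (arch_nth beta 0))%N
            (pd (arch_nth beta (size beta).-1)).
Proof.
case: beta => [//|p s] [hp _] hc _.
have cs : chainP p s by apply: arch_chainP.
have pp : pattern_pos p by exact: (hp 0%N).
have El : arch_nth (p :: s) (size (p :: s)).-1 = last p s.
  by rewrite /arch_nth (nth_last default_pattern (p :: s)).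
rewrite El /pstar_all /=; split; last exact: fold_formula.
move=> M [[|X Xs] [/= hsz [hX ->]]] //=.
case: hsz => hsz.
apply: fold_factor => //.
- exact: (hX 0%N).
- by move=> l hl; exact: (hX l.+1).
Qed.
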